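(* There is no nonnegative bivariate information decomposition $(SI,UI,CI)$ in which $UI$ satisfies the Blackwell property and $SI$ satisfies left monotonicity.
   Context: All random variables have finite alphabets. A nonnegative bivariate information decomposition consists of nonnegative functions $SI(S;X_1,X_2)$, $UI(S;X_1\setminus X_2)$, $UI(S;X_2\setminus X_1)$, $CI(S;X_1,X_2)$, defined for every joint distribution of $(S,X_1,X_2)$ with arbitrary finite alphabets and depending continuously on it, such that $I(S;X_1X_2)=SI(S;X_1,X_2)+CI(S;X_1,X_2)+UI(S;X_1\setminus X_2)+UI(S;X_2\setminus X_1)$, $I(S;X_1)=SI(S;X_1,X_2)+UI(S;X_1\setminus X_2)$ and $I(S;X_2)=SI(S;X_1,X_2)+UI(S;X_2\setminus X_1)$, where $I$ denotes mutual information. $UI$ has the Blackwell property if for every joint distribution $P_{SX_1X_2}$: $UI(S;X_1\setminus X_2)=0$ if and only if there exists a random variable $X_1'$ such that $S - X_2 - X_1'$ is a Markov chain and $P_{SX_1'}=P_{SX_1}$. $SI$ satisfies left monotonicity if $SI(S;X_1,X_2)\ge SI(f(S);X_1,X_2)$ for all $(S,X_1,X_2)$ and every function $f$ on the alphabet of $S$. *)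

(* Defs.v *)
From HB Require Import structures.
From mathcomp Require Import all_boot all_order all_algebra.
From mathcomp Require Import all_classical all_reals all_analysis.
Set Implicit Arguments. Unset Strict Implicit. Unset Printing Implicit Defensive.
Import Order.TTheory GRing.Theory Num.Theory.
Local Open Scope ring_scope.

Section InfoDefs.
Variable R : realType.

Definition is_dist (T : finType) (p : {ffun T -> R}) : Prop :=
  (forall t, 0 <= p t) /\ \sum_(t : T) p t = 1.

Definition dmap (T U : finType) (f : T -> U) (p : {ffun T -> R}) : {ffun U -> R} :=
  [ffun u => \sum_(t : T | f t == u) p t].

Definition mutinfo (A B : finType) (p : {ffun A * B -> R}) : R :=
  let pA := dmap (fun ab : A * B => ab.1) p in
  let pB := dmap (fun ab : A * B => ab.2) p in
  \sum_(ab : A * B)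
    (if p ab == 0 then 0 else p ab * ln (p ab / (pA ab.1 * pB ab.2))).

Definition pS_X1X2 (S X1 X2 : finType) (p : {ffun S * X1 * X2 -> R})
  : {ffun S * (X1 * X2) -> R} :=
  dmap (fun t : S * X1 * X2 => (t.1.1, (t.1.2, t.2))) p.
Definition pS_X1 (S X1 X2 : finType) (p : {ffun S * X1 * X2 -> R})
  : {ffun S * X1 -> R} :=
  dmap (fun t : S * X1 * X2 => (t.1.1, t.1.2)) p.
Definition pS_X2 (S X1 X2 : finType) (p : {ffun S * X1 * X2 -> R})
  : {ffun S * X2 -> R} :=
  dmap (fun t : S * X1 * X2 => (t.1.1, t.2)) p.

Definition swap12 (S X1 X2 : finType) (p : {ffun S * X1 * X2 -> R})
  : {ffun S * X2 * X1 -> R} :=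
  dmap (fun t : S * X1 * X2 => (t.1.1, t.2, t.1.2)) p.

Definition markov (A B C : finType) (q : {ffun A * B * C -> R}) : Prop :=
  forall a b c,
    q (a, b, c) * dmap (fun t : A * B * C => t.1.2) q b
    = dmap (fun t : A * B * C => t.1) q (a, b)
      * dmap (fun t : A * B * C => (t.1.2, t.2)) q (b, c).

Definition cont_on_dists (T : finType) (F : {ffun T -> R} -> R) : Prop :=
  forall p, is_dist p -> forall e : R, 0 < e -> exists2 d : R, 0 < d &
    forall q, is_dist q -> (forall t, `|p t - q t| < d) -> `|F p - F q| < e.

End InfoDefs.

(* For UI, [UI S X1 X2 p] is UI(S; X1 \ X2); UI(S; X2 \ X1) is
   [UI S X2 X1 (swap12 p)]. *)
Definition infofun (R : realType) :=
  forall S X1 X2 : finType, {ffun S * X1 * X2 -> R} -> R.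

Section Decomp.
Variable R : realType.

Definition nonneg_decomposition (SI UI CI : infofun R) : Prop :=
  forall (S X1 X2 : finType) (p : {ffun S * X1 * X2 -> R}), is_dist p ->
  (0 <= SI S X1 X2 p /\ 0 <= CI S X1 X2 p /\
   0 <= UI S X1 X2 p /\ 0 <= UI S X2 X1 (swap12 p)) /\
  (mutinfo (pS_X1X2 p) =
     SI S X1 X2 p + CI S X1 X2 p + UI S X1 X2 p + UI S X2 X1 (swap12 p) /\
   mutinfo (pS_X1 p) = SI S X1 X2 p + UI S X1 X2 p /\
   mutinfo (pS_X2 p) = SI S X1 X2 p + UI S X2 X1 (swap12 p)).

Definition continuous_decomposition (SI UI CI : infofun R) : Prop :=
  forall S X1 X2 : finType,
    [/\ cont_on_dists (SI S X1 X2), cont_on_dists (CI S X1 X2)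
      & cont_on_dists (UI S X1 X2)].

(* Blackwell property: UI(S;X1\X2) = 0 iff there is a random variable X1'
   (jointly distributed with (S,X1,X2), values in the alphabet of X1) such that
   S - X2 - X1' is a Markov chain and P_{S X1'} = P_{S X1}. The joint law of
   (S, X1, X2, X1') is q. *)
Definition blackwell (UI : infofun R) : Prop :=
  forall (S X1 X2 : finType) (p : {ffun S * X1 * X2 -> R}), is_dist p ->
  (UI S X1 X2 p = 0 <->
   exists q : {ffun S * X1 * X2 * X1 -> R},
     [/\ is_dist q,
         dmap (fun t : S * X1 * X2 * X1 => t.1) q = p,
         markov (dmap (fun t : S * X1 * X2 * X1 => (t.1.1.1, t.1.2, t.2)) q) &
         dmap (fun t : S * X1 * X2 * X1 => (t.1.1.1, t.2)) q = pS_X1 p]).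

Definition left_monotone (SI : infofun R) : Prop :=
  forall (S S' X1 X2 : finType) (f : S -> S') (p : {ffun S * X1 * X2 -> R}),
    is_dist p ->
    SI S' X1 X2 (dmap (fun t : S * X1 * X2 => (f t.1.1, t.1.2, t.2)) p)
      <= SI S X1 X2 p.

End Decomp.

(* Main.v *)
Require Import Defs.
From HB Require Import structures.
From mathcomp Require Import all_boot all_order all_algebra.
From mathcomp Require Import all_classical all_reals all_analysis.
From mathcomp Require Import ring lra.
Import Order.TTheory GRing.Theory Num.Theory.
Local Open Scope ring_scope.

Lemma sum_prodE (R : realType) (T1 T2 : finType) (F : T1 * T2 -> R) :
  \sum_(t : T1 * T2) F t = \sum_(x : T1) \sum_(y : T2) F (x, y).
Proof. by rewrite pair_bigA; apply: eq_bigr => -[]. Qed.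

Ltac expand := rewrite /dmap; repeat progress (rewrite ?ffunE ?big_mkcond ?sum_prodE ?big_bool /=).

Section Ex.
Variable R : realType.
Definition p0 : {ffun bool * bool * bool * bool -> R} :=
  [ffun t => let: (a, b, x1, x2) := t in
     1/4 * (if x1 == a then 3/4 else 1/4) *
     (if b then 1/2 else (if x2 == a then 1 else 0))].
Definition p1 : {ffun bool * bool * bool -> R} :=
  [ffun t => let: (a, x1, x2) := t in
     1/2 * (if x1 == a then 3/4 else 1/4) * (if x2 == a then 3/4 else 1/4)].

Lemma p0_dist : is_dist p0.
Proof.
split.
  move=> [[[a b] x1] x2]; rewrite ffunE; case: a; case: b; case: x1; case: x2 => /=; lra.
expand. lra.
Qed.

Lemma p0p1 : dmap (fun t : bool * bool * bool * bool => (t.1.1.1, t.1.2, t.2)) p0 = p1.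
Proof.
apply/ffunP => -[[a x1] x2]; case: a; case: x1; case: x2; expand; lra.
Qed.
Lemma p1_dist : is_dist p1.
Proof.
split.
  move=> [[a x1] x2]; rewrite ffunE; case: a; case: x1; case: x2 => /=; lra.
expand. lra.
Qed.

Definition q1 : {ffun bool * bool * bool * bool -> R} :=
  [ffun t => let: (a, x1, x2, y) := t in p1 (a, x1, x2) * (if y == x2 then 1 else 0)].

Lemma q1_dist : is_dist q1.
Proof.
split.
  move=> [[[a b] x1] x2]; rewrite !ffunE; case: a; case: b; case: x1; case: x2 => /=; lra.
expand. lra.
Qed.

Lemma q1_1 : dmap (fun t : bool * bool * bool * bool => t.1) q1 = p1.
Proof. apply/ffunP => -[[a x1] x2]; case: a; case: x1; case: x2; expand; lra. Qed.

Lemma q1_2 : dmap (fun t : bool * bool * bool * bool => (t.1.1.1, t.2)) q1 = pS_X1 p1.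
Proof. apply/ffunP => -[a x1]; case: a; case: x1; rewrite /pS_X1; expand; lra. Qed.

Lemma q1_3 : Defs.markov (dmap (fun t : bool * bool * bool * bool => (t.1.1.1, t.1.2, t.2)) q1).
Proof. move=> a b c; case: a; case: b; case: c; expand; lra. Qed.

End Ex.
Section Ex2.
Variable R : realType.
Lemma v0 a b x : pS_X1 (p0 R) ((a,b),x) = 1/4 * (if x == a then 3/4 else 1/4).
Proof. rewrite /pS_X1; case: a; case: b; case: x; expand; lra. Qed.
Lemma v0s a b : dmap (fun ab => ab.1) (pS_X1 (p0 R)) (a,b) = 1/4.
Proof. rewrite {1}/dmap ffunE; repeat progress rewrite ?big_mkcond ?sum_prodE ?big_bool /=; rewrite !v0.
 case: a; case: b => /=; lra. Qed.
Lemma v0x x : dmap (fun ab => ab.2) (pS_X1 (p0 R)) x = 1/2.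
Proof. rewrite {1}/dmap ffunE; repeat progress rewrite ?big_mkcond ?sum_prodE ?big_bool /=; rewrite !v0.
 case: x => /=; lra. Qed.
Lemma v1 a x : pS_X1 (p1 R) (a,x) = 1/2 * (if x == a then 3/4 else 1/4).
Proof. rewrite /pS_X1; case: a; case: x; expand; lra. Qed.
Lemma v1s a : dmap (fun ab => ab.1) (pS_X1 (p1 R)) a = 1/2.
Proof. rewrite {1}/dmap ffunE; repeat progress rewrite ?big_mkcond ?sum_prodE ?big_bool /=; rewrite !v1.
 case: a => /=; lra. Qed.
Lemma v1x x : dmap (fun ab => ab.2) (pS_X1 (p1 R)) x = 1/2.
Proof. rewrite {1}/dmap ffunE; repeat progress rewrite ?big_mkcond ?sum_prodE ?big_bool /=; rewrite !v1.
 case: x => /=; lra. Qed.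
Lemma mi : mutinfo (pS_X1 (p0 R)) = mutinfo (pS_X1 (p1 R)).
Proof.
rewrite /mutinfo /=; repeat progress rewrite ?sum_prodE ?big_bool /=; rewrite !v0 !v0s !v0x !v1 !v1s !v1x /=.
have n1 : (1 / 4 * (3 / 4) == 0 :> R) = false by apply: gt_eqF; lra.
have n2 : (1 / 4 * (1 / 4) == 0 :> R) = false by apply: gt_eqF; lra.
have n3 : (1 / 2 * (3 / 4) == 0 :> R) = false by apply: gt_eqF; lra.
have n4 : (1 / 2 * (1 / 4) == 0 :> R) = false by apply: gt_eqF; lra.
have e1 : (1 / 4 * (3 / 4) / (1 / 4 * (1 / 2)) :> R) = 3/2 by field.
have e2 : (1 / 4 * (1 / 4) / (1 / 4 * (1 / 2)) :> R) = 1/2 by field.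
have e3 : (1 / 2 * (3 / 4) / (1 / 2 * (1 / 2)) :> R) = 3/2 by field.
have e4 : (1 / 2 * (1 / 4) / (1 / 2 * (1 / 2)) :> R) = 1/2 by field.
rewrite n1 n2 n3 n4 e1 e2 e3 e4; lra.
Qed.
End Ex2.
Lemma dmap_comp (R : realType) (T U V : finType) (g : T -> U) (f : U -> V) (p : {ffun T -> R}) :
  dmap f (dmap g p) = dmap (f \o g) p.
Proof.
apply/ffunP => v; rewrite !ffunE.
rewrite [RHS](partition_big g (fun u => f u == v)); last by move=> t /=.
apply: eq_bigr => u /eqP fu; rewrite ffunE; apply: eq_bigl => t /=.
by case: eqP => [->|]; rewrite ?fu ?eqxx ?andbF.
Qed.

Ltac expandH H := rewrite /dmap in H; repeat progress (rewrite ?ffunE ?big_mkcond ?sum_prodE ?big_bool /= in H).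

Section Ex3.
Variable R : realType.
Lemma noq (q : {ffun bool * bool * bool * bool * bool -> R}) :
  dmap (fun t => t.1) q = p0 R ->
  Defs.markov (dmap (fun t : bool * bool * bool * bool * bool => (t.1.1.1, t.1.2, t.2)) q) ->
  dmap (fun t : bool * bool * bool * bool * bool => (t.1.1.1, t.2)) q = pS_X1 (p0 R) -> False.
Proof.
move=> h1 hm h2.
have M2 : forall b, dmap (fun w : bool * bool * bool * bool => w.1.2)
     (dmap (fun t : bool * bool * bool * bool * bool => (t.1.1.1, t.1.2, t.2)) q) b = 1/2.
  move=> b; rewrite dmap_comp.
  have -> : dmap ((fun w : bool * bool * bool * bool => w.1.2) \o
      (fun t : bool * bool * bool * bool * bool => (t.1.1.1, t.1.2, t.2))) q
      = dmap (fun u : bool * bool * bool * bool => u.2) (dmap (fun t => t.1) q) by rewrite dmap_comp.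
  by rewrite h1; case: b; expand; lra.
have M12 : forall a b x, dmap (fun w : bool * bool * bool * bool => w.1)
     (dmap (fun t : bool * bool * bool * bool * bool => (t.1.1.1, t.1.2, t.2)) q) ((a, b), x)
     = if b then 1/8 else (if x == a then 1/4 else 0).
  move=> a b x; rewrite dmap_comp.
  have -> : dmap ((fun w : bool * bool * bool * bool => w.1) \o
      (fun t : bool * bool * bool * bool * bool => (t.1.1.1, t.1.2, t.2))) q
      = dmap (fun u : bool * bool * bool * bool => (u.1.1, u.2)) (dmap (fun t => t.1) q) by rewrite dmap_comp.
  by rewrite h1; case: a; case: b; case: x; expand; lra.
move/ffunP: h2 => h2.
have g1 := h2 ((true, true), false); rewrite v0 in g1; expandH g1.
have g2 := h2 ((true, false), false); rewrite v0 in g2; expandH g2.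
have g3 := h2 ((false, true), false); rewrite v0 in g3; expandH g3.
have g4 := h2 ((false, false), false); rewrite v0 in g4; expandH g4.
have k := fun a b x2 => hm (a, b) x2 false.
have k1 := k true true true; rewrite M2 M12 dmap_comp in k1; expandH k1.
have k2 := k true true false; rewrite M2 M12 dmap_comp in k2; expandH k2.
have k3 := k true false true; rewrite M2 M12 dmap_comp in k3; expandH k3.
have k4 := k true false false; rewrite M2 M12 dmap_comp in k4; expandH k4.
have k5 := k false true true; rewrite M2 M12 dmap_comp in k5; expandH k5.
have k6 := k false true false; rewrite M2 M12 dmap_comp in k6; expandH k6.
have k7 := k false false true; rewrite M2 M12 dmap_comp in k7; expandH k7.
have k8 := k false false false; rewrite M2 M12 dmap_comp in k8; expandH k8.
clear M2 M12 hm h1 h2 k.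
lra.
Qed.
End Ex3.

Lemma arith_aux (R : realType) (a b c d m0 m1 : R) : m0 = a + b -> 0 <= b -> m1 = c + d -> d = 0 ->
    c <= a -> m0 = m1 -> b = 0.
Proof. move=> *; lra. Qed.

Theorem corollary1 (R : realType) :
  ~ exists SI UI CI : infofun R,
      [/\ nonneg_decomposition SI UI CI, continuous_decomposition SI UI CI,
          blackwell UI & left_monotone SI].
Proof.
move=> [SI [UI [CI [hdec _ hbw hlm]]]].
have hl := hlm (bool * bool)%type bool bool bool fst (p0 R) (p0_dist R).
rewrite p0p1 in hl.
have hu1 : UI bool bool bool (p1 R) = 0.
  apply/(hbw bool bool bool (p1 R) (p1_dist R)).
  exists (q1 R); split; [exact: q1_dist | exact: q1_1 | exact: q1_3 | exact: q1_2].
have [[n1 [n2 [n3 n4]]] [e1 [e2 e3]]] := hdec (bool * bool)%type bool bool (p0 R) (p0_dist R).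
have [_ [_ [f2 _]]] := hdec bool bool bool (p1 R) (p1_dist R).
have hu0 : UI (bool * bool)%type bool bool (p0 R) = 0.
  have hmi := mi R.
  exact: arith_aux e2 n3 f2 hu1 hl hmi.
have [q [_ qa qb qc]] := (hbw (bool * bool)%type bool bool (p0 R) (p0_dist R)).1 hu0.
exact: (@noq R q qa qb qc).
Qed.
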